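(* Let $\mathcal{H}$ be a right quaternionic Hilbert space and $x_1,\dots,x_n\in\mathcal{H}$ unit vectors. Then for each $m\in\mathbb{N}$ there exist unit vectors $x_{1,m},\dots,x_{n,m}\in\mathbb{H}^n$ such that $\langle x_{i,m},x_{j,m}\rangle=\langle x_i,x_j\rangle\,|\langle x_i,x_j\rangle|^{2m}$ for all $i,j$.
   Context: A right quaternionic Hilbert space is a right $\mathbb{H}$-vector space with inner product satisfying $\langle y,x\rangle=\overline{\langle x,y\rangle}$, $\langle xa+yb,z\rangle=\bar a\langle x,z\rangle+\bar b\langle y,z\rangle$, $\langle z,xa+yb\rangle=\langle z,x\rangle a+\langle z,y\rangle b$, $\langle x,x\rangle>0$ for $x\ne0$. $\mathbb{H}^n$ carries $\langle x,y\rangle=\sum_k\bar x_ky_k$. *)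

(* Defs.v *)
From HB Require Import structures.
From mathcomp Require Import all_boot all_order all_algebra.
From mathcomp Require Import reals.
Set Implicit Arguments. Unset Strict Implicit. Unset Printing Implicit Defensive.
Import Order.TTheory GRing.Theory Num.Theory.
Local Open Scope ring_scope.

Section Quat.
Variable R : realType.

(* q = q0 + q1 i + q2 j + q3 k *)
Record quat := Quat { q0 : R; q1 : R; q2 : R; q3 : R }.

Definition qreal (r : R) : quat := Quat r 0 0 0.
Definition qzero : quat := qreal 0.
Definition qone : quat := qreal 1.
Definition qadd (p q : quat) : quat :=
  Quat (q0 p + q0 q) (q1 p + q1 q) (q2 p + q2 q) (q3 p + q3 q).
Definition qopp (p : quat) : quat := Quat (- q0 p) (- q1 p) (- q2 p) (- q3 p).
Definition qmul (p q : quat) : quat :=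
  Quat (q0 p * q0 q - q1 p * q1 q - q2 p * q2 q - q3 p * q3 q)
       (q0 p * q1 q + q1 p * q0 q + q2 p * q3 q - q3 p * q2 q)
       (q0 p * q2 q - q1 p * q3 q + q2 p * q0 q + q3 p * q1 q)
       (q0 p * q3 q + q1 p * q2 q - q2 p * q1 q + q3 p * q0 q).
Definition qconj (p : quat) : quat := Quat (q0 p) (- q1 p) (- q2 p) (- q3 p).
Definition qabs (p : quat) : R :=
  Num.sqrt (q0 p ^+ 2 + q1 p ^+ 2 + q2 p ^+ 2 + q3 p ^+ 2).
Definition qpos (p : quat) : Prop :=
  [/\ 0 < q0 p, q1 p = 0, q2 p = 0 & q3 p = 0].

Record QHilbert := {
  hcar :> Type;
  hadd : hcar -> hcar -> hcar;
  hzero : hcar;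
  hopp : hcar -> hcar;
  hscale : hcar -> quat -> hcar;
  hip : hcar -> hcar -> quat;
  haddA : forall x y z, hadd x (hadd y z) = hadd (hadd x y) z;
  haddC : forall x y, hadd x y = hadd y x;
  hadd0 : forall x, hadd x hzero = x;
  haddN : forall x, hadd x (hopp x) = hzero;
  hscaleM : forall x a b, hscale x (qmul a b) = hscale (hscale x a) b;
  hscale1 : forall x, hscale x qone = x;
  hscaleDv : forall x y a, hscale (hadd x y) a = hadd (hscale x a) (hscale y a);
  hscaleDs : forall x a b, hscale x (qadd a b) = hadd (hscale x a) (hscale x b);
  hip_conj : forall x y, hip y x = qconj (hip x y);
  hip_linl : forall x y z a b,
    hip (hadd (hscale x a) (hscale y b)) z
    = qadd (qmul (qconj a) (hip x z)) (qmul (qconj b) (hip y z));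
  hip_linr : forall x y z a b,
    hip z (hadd (hscale x a) (hscale y b))
    = qadd (qmul (hip z x) a) (qmul (hip z y) b);
  hip_pos : forall x, x <> hzero -> qpos (hip x x);
  hcomplete : forall u : nat -> hcar,
    (forall e : R, 0 < e -> exists N : nat, forall p q : nat, (N <= p)%N -> (N <= q)%N ->
        Num.sqrt (q0 (hip (hadd (u p) (hopp (u q))) (hadd (u p) (hopp (u q))))) < e) ->
    exists l : hcar, forall e : R, 0 < e -> exists N : nat, forall p : nat, (N <= p)%N ->
        Num.sqrt (q0 (hip (hadd (u p) (hopp l)) (hadd (u p) (hopp l)))) < e
}.

Definition hnorm (H : QHilbert) (x : H) : R := Num.sqrt (q0 (hip x x)).

Definition qvec (n : nat) := 'I_n -> quat.
Definition qvec_ip (n : nat) (x y : qvec n) : quat :=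
  \big[qadd/qzero]_(k < n) qmul (qconj (x k)) (y k).
Definition qvec_norm (n : nat) (x : qvec n) : R := Num.sqrt (q0 (qvec_ip x x)).

End Quat.

(* Main.v *)
Require Import Defs.
From HB Require Import structures.
From mathcomp Require Import all_boot all_order all_algebra.
From mathcomp Require Import reals.
Import Order.TTheory GRing.Theory Num.Theory.
Local Open Scope ring_scope.
From mathcomp Require Import ring.
From Stdlib Require Import Classical FunctionalExtensionality.
Set Implicit Arguments. Unset Strict Implicit.
Section QuatRing.
Variable R : realType.
Definition qtup (q : quat R) := (q0 q, q1 q, q2 q, q3 q).
Definition qofup (t : R*R*R*R) : quat R := let '(a,b,c,d) := t in Quat a b c d.
Lemma qtupK : cancel qtup qofup. Proof. by case. Qed.
HB.instance Definition _ := Equality.copy (quat R) (can_type qtupK).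
HB.instance Definition _ := Choice.copy (quat R) (can_type qtupK).

Lemma qaddA : associative (@qadd R).
Proof. by case=> ????[????][????]; rewrite /qadd /=; congr Quat; ring. Qed.
Lemma qaddC : commutative (@qadd R).
Proof. by case=> ????[????]; rewrite /qadd /=; congr Quat; ring. Qed.
Lemma qadd0 : left_id (@qzero R) (@qadd R).
Proof. by case=> ????; rewrite /qadd /=; congr Quat; ring. Qed.
Lemma qaddN : left_inverse (@qzero R) (@qopp R) (@qadd R).
Proof. by case=> ????; rewrite /qadd /=; congr Quat; ring. Qed.
HB.instance Definition _ := GRing.isZmodule.Build (quat R) qaddA qaddC qadd0 qaddN.

Lemma qmulA : associative (@qmul R).
Proof. by case=> ????[????][????]; rewrite /qmul /=; congr Quat; ring. Qed.
Lemma qmul1 : left_id (@qone R) (@qmul R).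
Proof. by case=> ????; rewrite /qmul /=; congr Quat; ring. Qed.
Lemma qmulr1 : right_id (@qone R) (@qmul R).
Proof. by case=> ????; rewrite /qmul /=; congr Quat; ring. Qed.
Lemma qmulDl : left_distributive (@qmul R) (@qadd R).
Proof. by case=> ????[????][????]; rewrite /qmul /= /qadd /=; congr Quat; ring. Qed.
Lemma qmulDr : right_distributive (@qmul R) (@qadd R).
Proof. by case=> ????[????][????]; rewrite /qmul /= /qadd /=; congr Quat; ring. Qed.
Lemma qone_neq0 : (@qone R) != 0.
Proof. apply/eqP=> [[]] /eqP; rewrite oner_eq0. done. Qed.
HB.instance Definition _ := GRing.Zmodule_isNzRing.Build (quat R) qmulA qmul1 qmulr1 qmulDl qmulDr qone_neq0.

Lemma qaddE (p q : quat R) : qadd p q = p + q. Proof. by []. Qed.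
Lemma qmulE (p q : quat R) : qmul p q = p * q. Proof. by []. Qed.
Lemma qzeroE : qzero R = 0. Proof. by []. Qed.
Lemma qoneE : qone R = 1. Proof. by []. Qed.
End QuatRing.
Section QuatLemmas.
Variable R : realType.
Implicit Types p q : quat R.
Ltac qsolve := rewrite -?qaddE -?qmulE /qadd /qmul /qconj /qreal /=; congr Quat; ring.

Lemma qconjD p q : qconj (p + q) = qconj p + qconj q.
Proof. by case: p q => ????[????]; qsolve. Qed.
Lemma qconjM p q : qconj (p * q) = qconj q * qconj p.
Proof. by case: p q => ????[????]; qsolve. Qed.
Lemma qconjK p : qconj (qconj p) = p.
Proof. by case: p => ????; qsolve. Qed.
Lemma qconj0 : qconj (0 : quat R) = 0.
Proof. rewrite /qconj /=. change (Quat 0 (-0) (-0) (-0) = Quat (0:R) 0 0 0). by rewrite oppr0. Qed.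
Lemma qconjN1 : qconj (-1 : quat R) = -1.
Proof. change (qconj (qopp (qone R)) = qopp (qone R)); rewrite /qconj /qopp /qone /qreal /=; congr Quat; ring. Qed.
Lemma qrealM (a b : R) : qreal (a * b) = qreal a * qreal b.
Proof. qsolve. Qed.
Lemma qrealD (a b : R) : qreal (a + b) = qreal a + qreal b.
Proof. qsolve. Qed.
Lemma qreal1 : qreal 1 = (1 : quat R). Proof. by []. Qed.
Lemma qreal0 : qreal 0 = (0 : quat R). Proof. by []. Qed.
Lemma qrealC (a : R) p : qreal a * p = p * qreal a.
Proof. by case: p => ????; qsolve. Qed.
Lemma qconj_real (a : R) : qconj (qreal a) = qreal a.
Proof. rewrite /qconj /qreal /=. by rewrite oppr0. Qed.
Lemma qpos_real p : qpos p -> p = qreal (q0 p).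
Proof. by case: p => ????[/= _ -> -> ->]. Qed.
Lemma qconj_sum I (r : seq I) P (F : I -> quat R) :
  qconj (\sum_(i <- r | P i) F i) = \sum_(i <- r | P i) qconj (F i).
Proof. exact: (big_morph _ qconjD qconj0). Qed.
End QuatLemmas.
Section GS.
Variables (R : realType) (T : Type) (add : T -> T -> T) (zero : T)
  (scale : T -> quat R -> T) (ip : T -> T -> quat R).
Hypothesis ip_addl : forall x y z, ip (add x y) z = ip x z + ip y z.
Hypothesis ip_scalel : forall x a z, ip (scale x a) z = qconj a * ip x z.
Hypothesis ip_sym : forall x y, ip y x = qconj (ip x y).
Hypothesis ip_zero : forall z, ip zero z = 0.
Hypothesis ip_pos : forall x, x <> zero -> qpos (ip x x).

Fixpoint vsum k (f : nat -> T) := if k is k'.+1 then add (vsum k' f) (f k') else zero.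
Lemma ip_vsum k f z : ip (vsum k f) z = \sum_(l < k) ip (f l) z.
Proof.
elim: k => [|k IH] /=; first by rewrite big_ord0 ip_zero.
by rewrite ip_addl IH big_ord_recr.
Qed.

Lemma ip_zeror z : ip z zero = 0.
Proof. by rewrite ip_sym ip_zero qconj0. Qed.

Definition Inv k (v e : nat -> T) :=
 [/\ forall l, (l < k)%N -> (forall z, ip (e l) z = 0) \/ ip (e l) (e l) = 1,
     forall l l', (l < k)%N -> (l' < k)%N -> l != l' -> ip (e l) (e l') = 0 &
     forall i, (i < k)%N -> forall z,
        ip (v i) z = \sum_(l < k) qconj (ip (e l) (v i)) * ip (e l) z].

Lemma GS k v : exists e, Inv k v e.
Proof.
elim: k => [|k [e [Hn Ho He]]].
  by exists (fun _ => zero); split.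
pose S := vsum k (fun l => scale (e l) (ip (e l) (v k))).
pose r := add (v k) (scale S (-1)).
have ipr z : ip r z = ip (v k) z - \sum_(l < k) qconj (ip (e l) (v k)) * ip (e l) z.
  rewrite /r ip_addl ip_scalel qconjN1 ip_vsum mulN1r; congr (_ - _).
  by apply: eq_bigr => l _; rewrite ip_scalel.
have F1 l : (l < k)%N -> ip r (e l) = 0.
  move=> lk; rewrite ipr (bigD1 (Ordinal lk)) //= big1 ?addr0.
    case: (Hn l lk) => [Z|U].
      by rewrite (ip_sym (e l) (v k)) !Z qconj0 mulr0 subr0.
    by rewrite U mulr1 (ip_sym (e l) (v k)) subrr.
  move=> j neq; rewrite Ho ?mulr0 //.
have Fv i : (i < k)%N -> ip (v i) r = 0.
  move=> ik; rewrite He // big1 // => l _.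
  by rewrite (ip_sym r (e l)) F1 // qconj0 mulr0.
have Hrr : ip (v k) r = ip r r.
  rewrite [in RHS]ipr big1 ?subr0 // => l _.
  by rewrite (ip_sym r (e l)) F1 // qconj0 mulr0.
case: (classic (r = zero)) => [r0|rn0].
- exists (fun l => if l == k then zero else e l); split.
  + move=> l; rewrite ltnS leq_eqVlt => /orP[/eqP->|lk].
      by rewrite eqxx; left => z; exact: ip_zero.
    by rewrite (ltn_eqF lk); apply: Hn.
  + move=> l l' lk l'k nll'.
    case: ifP => [_|/negbT lnk]; first exact: ip_zero.
    case: ifP => [_|/negbT l'nk]; first exact: ip_zeror.
    apply: Ho => //; first by rewrite ltn_neqAle lnk -ltnS.
    by rewrite ltn_neqAle l'nk -ltnS.
  + move=> i ik z; rewrite big_ord_recr /= eqxx !ip_zero mulr0 addr0.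
    rewrite (eq_bigr (fun l : 'I_k => qconj (ip (e l) (v i)) * ip (e l) z)); last first.
      by move=> l _; rewrite (ltn_eqF (ltn_ord l)).
    move: ik; rewrite ltnS leq_eqVlt => /orP[/eqP->|ik]; last exact: He.
    have := ipr z; rewrite r0 ip_zero => /eqP; rewrite eq_sym subr_eq0 => /eqP.
    by [].
- have Hpos := ip_pos rn0.
  have Hp := qpos_real Hpos.
  have p0 : 0 < q0 (ip r r) by case: Hpos.
  move: Hp p0; set p := q0 (ip r r) => Hp p0.
  pose s := qreal (Num.sqrt p)^-1.
  pose ek := scale r s.
  have ipek z : ip ek z = s * ip r z by rewrite ip_scalel qconj_real.
  have sps : s * qreal p * s = 1.
    have sq : Num.sqrt p ^+ 2 = p := sqr_sqrtr (ltW p0).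
    have sn0 : Num.sqrt p != 0 by rewrite sqrtr_eq0 -ltNge.
    rewrite /s -!qrealM -qreal1; congr qreal.
    rewrite -{2}sq; field; exact: sn0.
  exists (fun l => if l == k then ek else e l); split.
  + move=> l; rewrite ltnS leq_eqVlt => /orP[/eqP->|lk].
      rewrite eqxx; right.
      by rewrite ipek (ip_sym ek r) ipek qconjM Hp !qconj_real mulrA.
    by rewrite (ltn_eqF lk); apply: Hn.
  + move=> l l' lk l'k nll'.
    case: ifP => [/eqP lek|/negbT lnk]; case: ifP => [/eqP l'ek|/negbT l'nk].
    * by move: nll'; rewrite lek l'ek eqxx.
    * rewrite ipek F1 ?mulr0 //.
      by rewrite ltn_neqAle l'nk -ltnS.
    * rewrite (ip_sym ek (e l)) ipek F1 ?mulr0 ?qconj0 //.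
      by rewrite ltn_neqAle lnk -ltnS.
    * apply: Ho => //; first by rewrite ltn_neqAle lnk -ltnS.
      by rewrite ltn_neqAle l'nk -ltnS.
  + move=> i ik z; rewrite big_ord_recr /= eqxx.
    rewrite (eq_bigr (fun l : 'I_k => qconj (ip (e l) (v i)) * ip (e l) z)); last first.
      by move=> l _; rewrite (ltn_eqF (ltn_ord l)).
    move: ik; rewrite ltnS leq_eqVlt => /orP[/eqP->|ik]; last first.
      by rewrite ipek (ip_sym (v i) r) Fv // qconj0 mulr0 qconj0 mul0r addr0; exact: He.
    rewrite !ipek (ip_sym (v k) r) Hrr Hp qconjM !qconj_real.
    rewrite -/s !mulrA (qrealC p s) sps mul1r ipr.
    by rewrite addrC subrK.
Qed.

Lemma GS_ord n (v : 'I_n -> T) :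
  exists y : 'I_n -> qvec R n, forall i j, qvec_ip (y i) (y j) = ip (v i) (v j).
Proof.
case: n v => [|n] v; first by exists (fun _ _ => 0) => -[].
have [e [_ _ He]] := GS n.+1 (fun l => v (inord l)).
exists (fun i k => ip (e k) (v i)) => i j.
have := He i (ltn_ord i) (v j); rewrite !inord_val => ->.
by [].
Qed.
End GS.
Section HInst.
Variables (R : realType) (H : QHilbert R).
Lemma qconj1 : qconj (1 : quat R) = 1.
Proof. exact: qconj_real. Qed.

Lemma H_addl (x y z : H) : hip (hadd x y) z = hip x z + hip y z.
Proof.
have := hip_linl x y z (qone R) (qone R); rewrite !hscale1 => ->.
by rewrite qaddE !qmulE qoneE qconj1 !mul1r.
Qed.

Lemma H_scale0 (x : H) : hscale x (qzero R) = hzero H.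
Proof.
have h := hscaleDs x (qzero R) (qzero R).
rewrite qaddE qzeroE addr0 -qzeroE in h.
rewrite -(haddN (hscale x (qzero R))) {2}h -haddA haddN hadd0 //.
Qed.

Lemma H_scalel (x : H) a z : hip (hscale x a) z = qconj a * hip x z.
Proof.
have := hip_linl x x z a (qzero R); rewrite H_scale0 hadd0 => ->.
by rewrite qaddE !qmulE qzeroE qconj0 mul0r addr0.
Qed.

Lemma H_zero (z : H) : hip (hzero H) z = 0.
Proof. by rewrite -(H_scale0 (hzero H)) H_scalel qzeroE qconj0 mul0r. Qed.
End HInst.

Section FInst.
Variables (R : realType) (I : finType).
Definition fv := I -> quat R.
Definition ipF (x y : fv) : quat R := \sum_(k : I) qconj (x k) * y k.
Definition fadd (x y : fv) : fv := fun k => x k + y k.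
Definition fzero : fv := fun _ => 0.
Definition fscale (x : fv) (a : quat R) : fv := fun k => x k * a.

Lemma F_addl x y z : ipF (fadd x y) z = ipF x z + ipF y z.
Proof. by rewrite /ipF -big_split; apply: eq_bigr => k _; rewrite /fadd qconjD mulrDl. Qed.
Lemma F_scalel x a z : ipF (fscale x a) z = qconj a * ipF x z.
Proof. by rewrite /ipF mulr_sumr; apply: eq_bigr => k _; rewrite /fscale qconjM mulrA. Qed.
Lemma F_sym x y : ipF y x = qconj (ipF x y).
Proof. by rewrite /ipF qconj_sum; apply: eq_bigr => k _; rewrite qconjM qconjK. Qed.
Lemma F_zero z : ipF fzero z = 0.
Proof. by rewrite /ipF big1 // => k _; rewrite /fzero qconj0 mul0r. Qed.

Definition qn2 (q : quat R) : R := q0 q ^+ 2 + q1 q ^+ 2 + q2 q ^+ 2 + q3 q ^+ 2.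
Lemma qconj_mul_self q : qconj q * q = qreal (qn2 q).
Proof. case: q => ????; rewrite -qmulE /qmul /qconj /qreal /qn2 /=; congr Quat; ring. Qed.
Lemma qn2_ge0 q : 0 <= qn2 q.
Proof. by rewrite /qn2 !addr_ge0 ?sqr_ge0. Qed.
Lemma qn2_gt0 q : q != 0 -> 0 < qn2 q.
Proof.
move=> qn0; rewrite lt_def qn2_ge0 andbT; apply: contra qn0.
rewrite /qn2 !paddr_eq0 ?addr_ge0 ?sqr_ge0 // !sqrf_eq0.
case: q => a b c d /= /andP[/andP[/andP[/eqP-> /eqP->] /eqP->] /eqP->]. by [].
Qed.
Lemma sum_qreal (F : I -> R) : \sum_(k : I) qreal (F k) = qreal (\sum_(k : I) F k).
Proof. by rewrite (big_morph _ (@qrealD R) (qreal0 R)). Qed.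

Lemma F_pos x : x <> fzero -> qpos (ipF x x).
Proof.
move=> xn0.
have [k xk] : exists k, x k != 0.
  apply: NNPP => H; apply: xn0; apply: functional_extensionality => k.
  apply/eqP; apply: contraT => nk; exfalso; apply: H; by exists k.
rewrite /ipF (eq_bigr (fun k => qreal (qn2 (x k)))); last by move=> j _; rewrite qconj_mul_self.
rewrite sum_qreal; split => //=.
rewrite (bigD1 k) //=; apply: ltr_wpDr; first by apply: sumr_ge0 => j _; exact: qn2_ge0.
exact: qn2_gt0.
Qed.
End FInst.
Section Main.
Variable R : realType.

Definition comp (c : 'I_4) (q : quat R) : R := nth 0 [:: q0 q; q1 q; q2 q; q3 q] c.
Definition dotq (p q : quat R) := q0 p * q0 q + q1 p * q1 q + q2 p * q2 q + q3 p * q3 q.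

Lemma comp_sum p q : \sum_(c < 4) comp c p * comp c q = dotq p q.
Proof. by rewrite !big_ord_recr big_ord0 /= /comp /dotq /= add0r. Qed.

Lemma q0_sum I (r : seq I) P (F : I -> quat R) :
  q0 (\sum_(i <- r | P i) F i) = \sum_(i <- r | P i) q0 (F i).
Proof. by apply: (big_morph (@q0 R)) => //. Qed.

Lemma qn2_q0 (q : quat R) : qn2 q = q0 (q * qconj q).
Proof. by case: q => ????; rewrite -qmulE /qn2 /qmul /qconj /=; ring. Qed.

Lemma term_id (a b c d : quat R) :
  q0 (qconj a * b * (qconj c * d)) = dotq (d * qconj a) (c * qconj b).
Proof.
case: a b c d => ????[????][????][????].
by rewrite -!qmulE /qmul /qconj /dotq /=; ring.
Qed.

Variable n : nat.
Definition J := ('I_n * 'I_n * 'I_4)%type.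
Definition uvec (y : qvec R n) (p : J) : R := comp p.2 (y p.1.1 * qconj (y p.1.2)).

Lemma uvec_ip (y z : qvec R n) :
  \sum_(p : J) uvec y p * uvec z p = qn2 (qvec_ip y z).
Proof.
rewrite -(pair_big xpredT xpredT (fun lk c => uvec y (lk, c) * uvec z (lk, c))) /=.
rewrite (eq_bigr (fun lk : 'I_n * 'I_n => dotq (y lk.1 * qconj (y lk.2)) (z lk.1 * qconj (z lk.2)))); last first.
  by move=> [l k] _; rewrite /uvec /= comp_sum.
rewrite -(pair_big xpredT xpredT (fun l k => dotq (y l * qconj (y k)) (z l * qconj (z k)))) /=.
rewrite qn2_q0.
change (qvec_ip y z) with (\sum_(k < n) qconj (y k) * z k).
rewrite qconj_sum mulr_suml.
rewrite [in RHS](eq_bigr (fun k : 'I_n => \sum_(l < n) (qconj (y k) * z k) * qconj (qconj (y l) * z l))); last first.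
  by move=> k _; rewrite mulr_sumr.
rewrite q0_sum [in RHS](eq_bigr (fun k : 'I_n => \sum_(l < n) q0 ((qconj (y k) * z k) * qconj (qconj (y l) * z l)))); last first.
  by move=> k _; rewrite q0_sum.
rewrite [RHS]exchange_big; apply: eq_bigr => l _; apply: eq_bigr => k _.
by rewrite qconjM qconjK term_id.
Qed.
End Main.
Unset Implicit Arguments. Set Strict Implicit.
Theorem mainTheorem15 (R : realType) (H : QHilbert R) (n : nat) (x : 'I_n -> H)
  (hx : forall i, hnorm (x i) = 1) :
  forall m : nat, exists xm : 'I_n -> qvec R n,
    (forall i, qvec_norm (xm i) = 1) /\
    (forall i j, qvec_ip (xm i) (xm j)
                 = qmul (hip (x i) (x j)) (qreal (qabs (hip (x i) (x j)) ^+ (2 * m)))).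
Proof.
move=> m.
have [y Hy] := GS_ord (@H_addl R H) (@H_scalel R H) (@hip_conj R H) (@H_zero R H) (@hip_pos R H) x.
pose G i j := hip (x i) (x j).
have Hind : forall m, exists (I : finType) (w : 'I_n -> I -> quat R),
    forall i j, ipF (w i) (w j) = G i j * qreal (qabs (G i j) ^+ (2 * m)).
  elim=> [|m' [I [w Hw]]].
    exists ('I_n : finType), y => i j.
    by rewrite muln0 expr0 qreal1 mulr1 /G -Hy.
  exists ((I * J n)%type : finType), (fun i p => w i p.1 * qreal (uvec (y i) p.2)) => i j.
  rewrite /ipF -(pair_big xpredT xpredT (fun a b => qconj (w i a * qreal (uvec (y i) b)) * (w j a * qreal (uvec (y j) b)))) /=.
  rewrite (eq_bigr (fun a => qconj (w i a) * w j a * qreal (\sum_(b : J n) uvec (y i) b * uvec (y j) b))); last first.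
    move=> a _; rewrite -sum_qreal mulr_sumr; apply: eq_bigr => b _.
    rewrite qconjM qconj_real qrealM !mulrA -(mulrA (qreal _) (qconj (w i a))).
    by rewrite (qrealC _ (qconj (w i a) * w j a)).
  rewrite -mulr_suml.
  change (\sum_(i0 : I) qconj (w i i0) * w j i0) with (ipF (w i) (w j)).
  rewrite Hw uvec_ip Hy -/(G i j).
  have -> : qn2 (G i j) = qabs (G i j) ^+ 2 by rewrite /qabs sqr_sqrtr // qn2_ge0.
  by rewrite -mulrA -qrealM -exprD mulnS addnC.
have [I [w Hw]] := Hind m.
have [xm Hxm] := GS_ord (@F_addl R I) (@F_scalel R I) (@F_sym R I) (@F_zero R I) (@F_pos R I) w.
exists xm; split; last by move=> i j; rewrite Hxm Hw.
move=> i; rewrite /qvec_norm Hxm Hw.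
have Gii : G i i = qreal 1.
  have xi0 : x i <> hzero H.
    move=> e; have := hx i; rewrite /hnorm e H_zero /= sqrtr0 => /eqP.
    by rewrite eq_sym oner_eq0.
  have Hp := hip_pos xi0.
  have tpos : 0 < q0 (hip (x i) (x i)) by case: Hp.
  rewrite /G (qpos_real Hp); congr qreal.
  have := hx i; rewrite /hnorm => h.
  by rewrite -(sqr_sqrtr (ltW tpos)) h expr1n.
rewrite Gii.
have -> : qabs (qreal (1 : R)) = 1.
  by rewrite /qabs /= expr1n !expr0n /= !addr0 sqrtr1.
by rewrite expr1n qreal1 mulr1 /= sqrtr1.
Qed.
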